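(* Let $q\in\mathbb{N}$, $q\ge1$, and let $F=(n_F)_{n\ge0}$ be defined by $0_F=0$, $1_F=1$, $2_F=q$, and $(j+2)_F=q\,(j+1)_F+j_F$ for $j\ge0$ (e.g. $q=2$ gives $1,2,5,12,29,70,\dots$ and $q=3$ gives $1,3,10,33,109,\dots$ from $n=1$). Then for all integers $0\le k<n$, the layer $\langle\Phi_{k+1}\to\Phi_n\rangle$ of the cobweb poset of $F$ (with $m=n-k$ levels) admits a tiling by blocks of type $\sigma P_m$.
   Context: Notation: $n_F\equiv F_n$. The cobweb poset of $F$ has, for each $s\ge1$, a level $\Phi_s$ consisting of $s_F$ distinct vertices (levels pairwise disjoint), plus a root level $\Phi_0$ with one vertex; for $x\in\Phi_i$, $y\in\Phi_j$ one has $x<y$ iff $i<j$. For $1\le a\le b$, the layer $\langle\Phi_a\to\Phi_b\rangle$ is the subposet on $\Phi_a\cup\dots\cup\Phi_b$; it has $m=b-a+1$ levels and its maximal chains form the set $\Phi_a\times\dots\times\Phi_b$. For a permutation $\sigma$ of $\{1,\dots,m\}$, a block of type $\sigma P_m$ in this layer is the subposet induced on $V_a\cup\dots\cup V_b$ where $V_{a-1+i}\subseteq\Phi_{a-1+i}$ and $|V_{a-1+i}|=\sigma(i)_F$ for $i=1,\dots,m$; its maximal chains form the set $V_a\times\dots\times V_b$. A tiling of the layer is a finite family of such blocks ($\sigma$ may vary from block to block) whose sets $V_a\times\dots\times V_b$ partition $\Phi_a\times\dots\times\Phi_b$ (pairwise max-disjoint and covering all maximal chains). *)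

(* Defs.v *)
From Stdlib Require List.
From mathcomp Require Import all_boot all_fingroup.
Set Implicit Arguments. Unset Strict Implicit. Unset Printing Implicit Defensive.

Fixpoint Fq (q n : nat) : nat :=
  match n with
  | 0 => 0
  | 1 => 1
  | (m.+1 as p).+1 => q * Fq q p + Fq q m
  end.

(* Layer <Phi_a -> Phi_(a+m-1)>, levels indexed by i : 'I_m
   (level i is Phi_(a+i)); the vertices of Phi_s are 0, ..., s_F - 1.
   A maximal chain is a choice c i of one vertex in each level. *)
Definition is_max_chain (q a m : nat) (c : 'I_m -> nat) : Prop :=
  forall i : 'I_m, c i < Fq q (a + i).

(* A block: a permutation sigma of {1..m} (encoded as a permutation of
   'I_m, sigma(i+1) = (s i) + 1) together with the subsets V i of the
   levels (as duplicate-free lists of vertices). *)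
Definition block (m : nat) : Type := ({perm 'I_m} * ('I_m -> seq nat))%type.

Definition is_block (q a m : nat) (B : block m) : Prop :=
  forall i : 'I_m,
    [/\ uniq (B.2 i),
        all (fun x => x < Fq q (a + i)) (B.2 i)
      & size (B.2 i) = Fq q ((B.1 i).+1)].

Definition chain_in (m : nat) (B : block m) (c : 'I_m -> nat) : bool :=
  [forall i : 'I_m, c i \in B.2 i].

Definition is_tiling (q a m : nat) (T : seq (block m)) : Prop :=
  (forall B, List.In B T -> @is_block q a m B) /\
  (forall c, @is_max_chain q a m c -> count (fun B => chain_in B c) T = 1).
Arguments is_max_chain : clear implicits.
Arguments is_block : clear implicits.
Arguments is_tiling : clear implicits.

(* Main.v *)
From Stdlib Require Import Arith.
Require Import Defs.
From mathcomp Require Import all_boot all_fingroup.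
Set Implicit Arguments. Unset Strict Implicit. Unset Printing Implicit Defensive.

Lemma all2_rcons (S T : Type) (r : S -> T -> bool) s t x y :
  size s = size t -> all2 r (rcons s x) (rcons t y) = all2 r s t && r x y.
Proof.
elim: s t => [|a s IH] [|b t] //=; first by rewrite andbT.
by case=> e; rewrite IH // andbA.
Qed.

Lemma all2_size (S T : Type) (r : S -> T -> bool) s t :
  all2 r s t -> size s = size t.
Proof. by rewrite all2E => /andP[/eqP]. Qed.

Lemma all2_rev (S T : Type) (r : S -> T -> bool) s t :
  size s = size t -> all2 r (rev s) (rev t) = all2 r s t.
Proof.
elim: s t => [|a s IH] [|b t] //= [e].
by rewrite !rev_cons all2_rcons ?size_rev // IH // andbC.
Qed.

Lemma all2_nth (S T : Type) (r : S -> T -> bool) x0 y0 s t :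
  size s = size t ->
  all2 r s t = all (fun i => r (nth x0 s i) (nth y0 t i)) (iota 0 (size s)).
Proof.
elim: s t => [|a s IH] [|b t] //= [e].
rewrite IH // (iotaDl 1 0) all_map.
by congr (_ && _); apply: eq_all => i.
Qed.

Section T.
Variable q : nat.
Local Notation F := (Fq q).

Lemma FS n : F n.+2 = q * F n.+1 + F n.
Proof. by []. Qed.

Lemma Fadd a b : F (a + b.+1) = F a.+1 * F b.+1 + F a * F b.
Proof.
elim/ltn_ind: a => -[|[|a]] IH.
- by rewrite add0n /= mul1n mul0n addn0.
- by rewrite add1n /= muln1 addn0 mul1n.
- rewrite !addSn FS -addSn IH // IH // !FS.
  rewrite -!plusE -!multE; ring.
Qed.
End T.

Definition chain_of (a c : seq nat) := all2 (fun x s => x < s) c a.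
Definition inbox (c : seq nat) (B : seq (seq nat)) := all2 (fun x V => x \in V) c B.
Definition okbox (a b : seq nat) (B : seq (seq nat)) :=
  all2 (fun V s => uniq V && all (fun x => x < s) V) B a && perm_eq (map size B) b.
Definition tiles a b T := all (okbox a b) T /\ forall c, chain_of a c -> count (inbox c) T = 1.

Lemma all2_cons (S T : Type) (r : S -> T -> bool) x y s t :
  all2 r (x::s) (y::t) = r x y && all2 r s t.
Proof. by []. Qed.

Lemma tiles_triv a : tiles a a [:: map (iota 0) a].
Proof.
split.
  rewrite /= andbT /okbox -map_comp (eq_map (size_iota 0)) map_id perm_refl andbT.
  by elim: a => //= s a ->; rewrite iota_uniq andbT; apply/allP => x; rewrite mem_iota.
move=> c; rewrite /= addn0 => H.
suff -> : inbox c (map (iota 0) a) by [].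
elim: c a H => [|x c IH] [|s a] //= /andP[h1 h2].
by rewrite mem_iota h1 IH.
Qed.

Lemma tiles_cons s a b T : tiles a b T -> tiles (s::a) (s::b) (map (cons (iota 0 s)) T).
Proof.
move=> [H1 H2]; split.
  rewrite all_map; apply/allP => B /(allP H1) /andP[h1 h2].
  rewrite /okbox /= iota_uniq h1 size_iota perm_cons h2 !andbT /=.
  by apply/allP => x; rewrite mem_iota add0n; case/andP.
case=> [|z c] //= /andP[hz hc]; rewrite count_map -(H2 _ hc).
by apply: eq_count => B; rewrite /= /inbox /= mem_iota hz.
Qed.

Definition shift x (B : seq (seq nat)) :=
  if B is V :: B' then map (addn x) V :: B' else B.

Lemma tiles_split x y a b T1 T2 : tiles (x::a) b T1 -> tiles (y::a) b T2 ->
  tiles ((x+y)::a) b (T1 ++ map (shift x) T2).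
Proof.
move=> [H1 H2] [K1 K2]; split.
  rewrite all_cat all_map; apply/andP; split.
    apply/allP => -[|V B] /(allP H1); rewrite /okbox ?all2_cons //.
    move=> /andP[/andP[/andP[u al] h] p].
    rewrite u h p !andbT /=.
    by apply/allP => w /(allP al) /= hw; apply: leq_trans hw (leq_addr _ _).
  apply/allP => -[|V B] /(allP K1); first by rewrite /okbox /=.
  change (okbox (y::a) b (V::B) -> okbox ((x+y)::a) b (map (addn x) V :: B)).
  rewrite /okbox !all2_cons.
  move=> /andP[/andP[/andP[u al] h] p].
  rewrite map_inj_uniq ?u ?h; last exact: addnI.
  rewrite /= size_map p !andbT all_map.
  by apply/allP => w /(allP al) /= hw; rewrite ltn_add2l.
case=> [|z c] //= /andP[hz hc]; rewrite count_cat count_map.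
case: (ltnP z x) => hzx.
  rewrite (H2 (z::c)) /=; last by rewrite hzx.
  rewrite (@eq_in_count _ _ pred0) ?count_pred0 // => -[|V B] /(allP K1) //= _.
  apply/negbTE/negP => /andP[/mapP[w _ e] _].
  by move: hzx; rewrite e ltnNge leq_addr.
rewrite (@eq_in_count _ _ pred0 T1) ?count_pred0 ?add0n; last first.
  move=> -[|V B] /(allP H1) //= /andP[/andP[/andP[_ al] _] _].
  apply/negbTE/negP => /andP[/(allP al) /=]; by rewrite ltnNge hzx.
rewrite -(K2 ((z - x) :: c)) /=; last by rewrite hc andbT ltn_subLR.
apply: eq_count => -[|V B] //=.
by rewrite /inbox /= -{1}(subnKC hzx) mem_map //; exact: addnI.
Qed.

Lemma tiles_mul c s a b : (exists T, tiles (s::a) b T) -> exists T, tiles (c * s :: a) b T.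
Proof.
move=> [T HT]; elim: c => [|c [T' IH]].
  by exists [::]; split => // -[|z c'].
by exists (T ++ map (shift s) T'); rewrite mulSn; apply: tiles_split.
Qed.

Lemma tiles_rot x a b T : tiles (rcons a x) b T -> tiles (x :: a) b (map (rotr 1) T).
Proof.
move=> [H1 H2]; split.
  rewrite all_map; apply/allP => B /(allP H1) /andP[h p].
  have hs := all2_size h.
  move: h p hs; case/lastP: B => [|B V]; first by move=> _ _; rewrite size_rcons.
  rewrite /= rotr1_rcons size_rcons !size_rcons => h p [hs].
  rewrite all2_rcons // in h; case/andP: h => h1 h2.
  rewrite /okbox /= h1 h2 /=.
  by rewrite map_rcons perm_rcons in p.
case=> [|z c] //= /andP[hz hc].
have hsc := all2_size hc.
rewrite count_map; transitivity (count (inbox (rcons c z)) T); last first.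
  by apply: H2; rewrite /chain_of all2_rcons // hz andbT.
apply: eq_in_count => B /(allP H1) /andP[h _].
have hs := all2_size h.
move: h hs; case/lastP: B => [|B V]; first by move=> _; rewrite size_rcons.
rewrite /= rotr1_rcons !size_rcons => _ [hs].
by rewrite /inbox all2_rcons /= ?hs // andbC.
Qed.

Section Lv.
Variable q : nat.
Local Notation F := (Fq q).

Fixpoint lv k m := if m is m'.+1 then F (k + m'.+1) :: lv k m' else [::].

Lemma lv_rcons k m : lv k m.+1 = rcons (lv k.+1 m) (F k.+1).
Proof.
elim: m => [|m IH]; first by rewrite /= addn1.
by rewrite -[lv k m.+2]/(F (k + m.+2) :: lv k m.+1) IH /= -addSnnS.
Qed.

Lemma tileable m k : exists T, tiles (lv k m) (lv 0 m) T.
Proof.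
elim: m k => [|m IHm] k; first by exists [:: [::]]; apply: (tiles_triv [::]).
elim: k => [|k IHk]; first by exists [:: map (iota 0) (lv 0 m.+1)]; apply: tiles_triv.
have X : exists T, tiles (F k.+2 * F m.+1 :: lv k.+1 m) (lv 0 m.+1) T.
  apply: tiles_mul; case: (IHm k.+1) => T HT.
  by exists (map (cons (iota 0 (F m.+1))) T); rewrite -[lv 0 m.+1]/(F (0 + m.+1) :: lv 0 m) add0n; apply: tiles_cons.
have Y : exists T, tiles (F k.+1 * F m :: lv k.+1 m) (lv 0 m.+1) T.
  rewrite mulnC; apply: tiles_mul; case: IHk => T HT.
  by exists (map (rotr 1) T); apply: tiles_rot; rewrite -lv_rcons.
case: X => T1 H1; case: Y => T2 H2.
exists (T1 ++ map (shift (F k.+2 * F m.+1)) T2).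
rewrite -[lv k.+1 m.+1]/(F (k.+1 + m.+1) :: lv k.+1 m) Fadd; exact: tiles_split.
Qed.
End Lv.

Section Fin.
Variable q : nat.
Local Notation F := (Fq q).

Lemma rev_lv k m : rev (lv q k m) = map (fun i => F (k + i.+1)) (iota 0 m).
Proof.
elim: m => [|m IH] //.
rewrite -[lv q k m.+1]/(F (k + m.+1) :: lv q k m) rev_cons IH.
have -> : iota 0 m.+1 = rcons (iota 0 m) m by rewrite -cats1 -addn1 iotaD.
by rewrite map_rcons.
Qed.

Lemma size_lv k m : size (lv q k m) = m.
Proof. by rewrite -size_rev rev_lv size_map size_iota. Qed.

Lemma forall_iota m (P : nat -> bool) :
  [forall i : 'I_m, P i] = all P (iota 0 m).
Proof.
apply/forallP/allP => [H j | H i].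
  by rewrite mem_iota add0n => /andP[_ hj]; exact: (H (Ordinal hj)).
by apply: H; rewrite mem_iota add0n ltn_ord.
Qed.

Lemma ok_nth k m B : okbox (lv q k m) (lv q 0 m) B ->
  size B = m /\
  (forall i, i < m -> uniq (nth [::] (rev B) i) /\
     all (fun x => x < F (k + i.+1)) (nth [::] (rev B) i)).
Proof.
case/andP => h _.
have hs := all2_size h; rewrite size_lv in hs.
split => // i hi.
rewrite -all2_rev ?size_lv // (all2_nth _ [::] 0) ?size_rev ?size_lv // in h.
move/allP: h => /(_ i); rewrite ?size_rev ?hs mem_iota add0n hi rev_lv.
by rewrite (nth_map 0) ?size_iota // nth_iota // add0n => /(_ isT) /andP.
Qed.

Definition Vf m (B : seq (seq nat)) : 'I_m -> seq nat := fun i => nth [::] (rev B) i.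
Arguments Vf : clear implicits.
Definition pickp m (B : seq (seq nat)) : {perm 'I_m} :=
  odflt 1%g [pick p : {perm 'I_m} | [forall i, size (Vf m B i) == F (p i).+1]].
Arguments pickp : clear implicits.
Definition blk m B : block m := (pickp m B, Vf m B).
Arguments Vf : clear implicits. Arguments pickp : clear implicits. Arguments blk : clear implicits.

Lemma blk_ok k m B : okbox (lv q k m) (lv q 0 m) B -> is_block q k.+1 m (blk m B).
Proof.
move=> hB; have [hs hn] := ok_nth hB.
have ex : exists p : {perm 'I_m}, [forall i, size (Vf m B i) == F (p i).+1].
  case/andP: hB => _ hp.
  pose t := [tuple F i.+1 | i < m].
  have tE : val t = map (fun j => F j.+1) (iota 0 m).
    apply: (@eq_from_nth _ 0); first by rewrite size_tuple size_map size_iota.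
    move=> j; rewrite size_tuple => hj.
    by rewrite (nth_mktuple _ 0 (Ordinal hj)) (nth_map 0) ?size_iota // nth_iota.
  have : perm_eq (map size (rev B)) t.
    rewrite map_rev tE.
    have -> : map (fun j => F j.+1) (iota 0 m) = rev (lv q 0 m).
      by rewrite rev_lv; apply: eq_map => j; rewrite add0n.
    by rewrite perm_rev perm_sym perm_rev perm_sym.
  case/tuple_permP => p hpe; exists p; apply/forallP => i.
  have := congr1 (fun s => nth 0 s i) hpe.
  rewrite /= (nth_mktuple _ 0 i) tnth_mktuple (nth_map [::]) ?size_rev ?hs //.
  by move=> e; rewrite /Vf e.
move=> i; have [u al] := hn i (ltn_ord i).
split => //; first by rewrite addSnnS.
rewrite /blk /pickp /=; case: pickP => [p /forallP /(_ i) /eqP //|].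
by move=> H; case: ex => p; rewrite H.
Qed.

Lemma final k m : exists T : seq (block m), is_tiling q k.+1 m T.
Proof.
case: (tileable q m k) => T [H1 H2].
exists (map (blk m) T); split.
  have inT : forall (x : seq (seq nat)) s, List.In x s -> x \in s.
    move=> x; elim=> //= y s IH [->|/IH]; rewrite inE ?eqxx // => ->; apply: orbT.
  by move=> B /List.in_map_iff [B0 [<- /inT /(allP H1)]]; apply: blk_ok.
move=> c hc.
pose cs := [seq c i | i <- enum 'I_m].
have ncs : forall i : 'I_m, nth 0 cs i = c i.
  by move=> i; rewrite (nth_map i) ?size_enum_ord // nth_ord_enum.
have scs : size cs = m by rewrite size_map size_enum_ord.
rewrite count_map -(H2 (rev cs)); last first.
  rewrite /chain_of -(revK (lv q k m)) all2_rev ?size_rev ?size_lv //.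
  rewrite (all2_nth _ 0 0) ?size_rev ?size_lv // scs -forall_iota.
  apply/forallP => i; rewrite ncs rev_lv (nth_map 0) ?size_iota // nth_iota //.
  by rewrite add0n -addSnnS; apply: hc.
apply: eq_in_count => B /(allP H1) hB; have [hs _] := ok_nth hB.
rewrite /preim /chain_in /inbox /= -(revK B) all2_rev ?size_rev ?hs //.
rewrite (all2_nth _ 0 [::]) ?size_rev ?hs // scs -forall_iota.
by apply: eq_forallb => i; rewrite ncs revK.
Qed.
End Fin.

Theorem mainTheorem8 (q k n : nat) :
  1 <= q -> k < n ->
  exists T : seq (block (n - k)), is_tiling q k.+1 (n - k) T.
Proof. by move=> _ _; apply: final. Qed.
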